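(* Let $(\delta_t)_{t\ge1}$ be a sequence of nonnegative reals, let $\kappa>0$, $\omega\ge0$, $\sigma>0$ and $\epsilon_t=\sigma/t^2$. If $$\delta_{t+1}\le\delta_t-\kappa\delta_t^2+\omega\epsilon_t\quad\text{for all }t\ge1,$$ then for all $t\ge1$, $\delta_t\le C/t$, where $$C:=\frac{4}{\kappa}\Big(1+\sqrt{2\omega\sigma\kappa(\omega\sigma\kappa+1)}\Big)+4\max\Big\{\delta_1,\frac{4}{\kappa}\Big\}.$$ *)

(* Defs.v *)
From Stdlib Require Import Reals.
Open Scope R_scope.

Definition lemma11_C (kappa omega sigma delta1 : R) : R :=
  4 / kappa * (1 + sqrt (2 * omega * sigma * kappa * (omega * sigma * kappa + 1)))
  + 4 * Rmax delta1 (4 / kappa).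

(* Main.v *)
Require Import Defs.
From Stdlib Require Import Reals Lra Psatz.
Open Scope R_scope.
Lemma step (k w s C t d d' q : R) : 0<k -> 0<=w -> 0<s -> 1<=t -> 0<=d -> d <= C/t ->
  d' <= d - k*d^2 + w*(s/t^2) -> 0<=q -> q*q = 2*(w*s*k)*(w*s*k+1) -> 20 + 4*q <= k*C ->
  d' <= C/(t+1).
Proof.
intros hk hw hs ht hd hdC hrec hq hq2 hy.
assert (hA : 0 <= w*s*k) by (apply Rmult_le_pos; [apply Rmult_le_pos|]; lra).
set (A := w*s*k) in *.
assert (hqA : A <= q) by (destruct (Rle_lt_dec A q); [auto|nra]).
set (y := k*C) in *.
assert (eC : C = y/k) by (unfold y; field; lra).
assert (e1 : w*(s/t^2) = A/k/t^2) by (unfold A; field; lra).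
rewrite e1 in hrec.
assert (ht0 : 0 < t) by lra.
assert (hden : 0 < k*t^2*(t+1)) by (apply Rmult_lt_0_compat; [apply Rmult_lt_0_compat|]; nra).
destruct (Rle_lt_dec (2*y) t) as [c1|c2].
- assert (hf : d - k*d^2 <= C/t - k*(C/t)^2).
  { assert (hD : 2*k*(C/t) <= 1).
    { rewrite eC. replace (2*k*(y/k/t)) with ((2*y)/t) by (field; lra).
      apply Rmult_le_reg_r with t; auto. field_simplify; lra. }
    assert (0 <= (C/t - d)*(1 - k*(C/t+d))) by (apply Rmult_le_pos; nra).
    nra. }
  assert (E : C/(t+1) - (C/t - k*(C/t)^2 + A/k/t^2) = ((t+1)*(y*y-A) - y*t)/(k*t^2*(t+1)))
    by (rewrite eC; field; lra).
  assert (Y1 : y*y - A >= y) by nra.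
  assert (N : 0 <= ((t+1)*(y*y-A) - y*t)) by nra.
  assert (0 <= ((t+1)*(y*y-A) - y*t)/(k*t^2*(t+1))) by (unfold Rdiv; apply Rmult_le_pos; [lra| left; apply Rinv_0_lt_compat; lra]).
  lra.
- assert (hf : d - k*d^2 <= 1/(4*k)).
  { assert (0 <= (2*k*d-1)^2) by apply pow2_ge_0.
    assert (E : 1/(4*k) - (d - k*d^2) = (2*k*d-1)^2/(4*k)) by (field; lra).
    assert (0 <= (2*k*d-1)^2/(4*k)) by (unfold Rdiv; apply Rmult_le_pos; [lra| left; apply Rinv_0_lt_compat; lra]). lra. }
  assert (E : C/(t+1) - (1/(4*k) + A/k/t^2) = (4*y*t^2 - t^2*(t+1) - 4*A*(t+1))/(4*(k*t^2*(t+1))))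
    by (rewrite eC; field; lra).
  assert (H1 : t^2*t <= 2*y*t^2) by (assert (0 <= t^2*(2*y-t)) by (apply Rmult_le_pos; nra); nra).
  assert (H2 : A*(t+1) <= 2*A*t^2) by (assert (0 <= A*(2*t^2 - t - 1)) by (apply Rmult_le_pos; nra); nra).
  assert (H3 : 0 <= t^2*(2*y - 1 - 8*A)) by (apply Rmult_le_pos; nra).
  assert (N : 0 <= 4*y*t^2 - t^2*(t+1) - 4*A*(t+1)) by nra.
  assert (0 <= (4*y*t^2 - t^2*(t+1) - 4*A*(t+1))/(4*(k*t^2*(t+1)))) by (unfold Rdiv; apply Rmult_le_pos; [lra| left; apply Rinv_0_lt_compat; lra]).
  lra.
Qed.
Theorem lemma11 (delta : nat -> R) (kappa omega sigma : R)
  (hdelta : forall t : nat, (1 <= t)%nat -> 0 <= delta t)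
  (hkappa : 0 < kappa) (homega : 0 <= omega) (hsigma : 0 < sigma)
  (hrec : forall t : nat, (1 <= t)%nat ->
     delta (S t) <= delta t - kappa * (delta t) ^ 2 + omega * (sigma / (INR t) ^ 2)) :
  forall t : nat, (1 <= t)%nat ->
    delta t <= lemma11_C kappa omega sigma (delta 1%nat) / INR t.
Proof.
  set (q := sqrt (2 * omega * sigma * kappa * (omega * sigma * kappa + 1))).
  assert (hA : 0 <= omega*sigma*kappa) by (apply Rmult_le_pos; [apply Rmult_le_pos|]; lra).
  assert (hq : 0 <= q) by apply sqrt_pos.
  assert (hq2 : q*q = 2*(omega*sigma*kappa)*(omega*sigma*kappa+1)).
  { unfold q. rewrite sqrt_sqrt; [ring|].
    apply Rmult_le_pos; nra. }
  assert (hd1 : 0 <= delta 1%nat) by (apply hdelta; lia).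
  assert (hm1 : delta 1%nat <= Rmax (delta 1%nat) (4/kappa)) by apply Rmax_l.
  assert (hm2 : 4/kappa <= Rmax (delta 1%nat) (4/kappa)) by apply Rmax_r.
  assert (hk4 : kappa * (4/kappa) = 4) by (field; lra).
  assert (hCe : kappa * lemma11_C kappa omega sigma (delta 1%nat) =
     4*(1+q) + 4*(kappa*Rmax (delta 1%nat) (4/kappa))) by (unfold lemma11_C, q; field; lra).
  assert (hy : 20 + 4*q <= kappa * lemma11_C kappa omega sigma (delta 1%nat)).
  { rewrite hCe. assert (kappa*(4/kappa) <= kappa*Rmax (delta 1%nat) (4/kappa))
      by (apply Rmult_le_compat_l; lra). lra. }
  assert (hC1 : delta 1%nat <= lemma11_C kappa omega sigma (delta 1%nat)).
  { unfold lemma11_C. fold q.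
    assert (0 <= 4/kappa) by (unfold Rdiv; apply Rmult_le_pos; [lra|left; apply Rinv_0_lt_compat; lra]).
    assert (0 <= 4/kappa*(1+q)) by (apply Rmult_le_pos; lra). lra. }
  intros t ht. destruct t as [|n]; [lia|]. clear ht.
  induction n as [|n IH].
  - simpl INR. rewrite Rdiv_1_r. exact hC1.
  - rewrite (S_INR (S n)).
    apply (step kappa omega sigma _ (INR (S n)) (delta (S n)) _ q); auto.
    + rewrite S_INR. pose proof (pos_INR n). lra.
    + apply hdelta; lia.
    + apply hrec; lia.
Qed.
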